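(* Let $\lambda\in(0,1)$ and $\omega\in(0,1]$ be fixed with $\omega\le (1-\lambda)/\lambda$. The capacity of the symmetric network coding channel $\mathrm{SNC}(\lambda,\omega)$ is $$C(\lambda,\omega)=1-\lambda-\omega+\lambda\omega^2 .$$
   Context: Fix a prime power $q$ and the finite field $\mathbb{F}_q$. For an integer $N$ let $\ell=\lambda N$ and $m=N-\ell$ (considered along values of $N$ for which $\ell$ and $\ell\omega$ are integers). The symmetric network coding channel $\mathrm{SNC}(\lambda,\omega)$ has as input an $\ell\times m$ matrix $\underline{x}$ over $\mathbb{F}_q$ and as output $\underline{y}=\underline{x}+\underline{z}$, where $\underline{z}$ is chosen, independently of $\underline{x}$, uniformly at random among all $\ell\times m$ matrices over $\mathbb{F}_q$ of rank exactly $\ell\omega$. Its capacity is defined as $$C(\lambda,\omega)=\lim_{N\to\infty,\ \ell=\lambda N}\frac{1}{N\ell}\sup_{P_{\underline{X}}} I(\underline{X};\underline{Y}),$$ where the supremum is over input distributions, $I$ is mutual information measured in base-$q$ logarithms, and $\underline{Y}$ is the channel output for input $\underline{X}$. *)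

(* Defs.v *)
From HB Require Import structures.
From mathcomp Require Import all_boot all_order all_algebra all_field.
From mathcomp Require Import all_classical all_reals all_analysis.
Set Implicit Arguments. Unset Strict Implicit. Unset Printing Implicit Defensive.
Import Order.TTheory GRing.Theory Num.Theory.
Local Open Scope classical_set_scope.
Local Open Scope ring_scope.

Section SNC.
Variables (R : realType) (F : finFieldType) (l m k : nat).

Definition logq (x : R) : R := ln x / ln (#|F|%:R).

Definition rank_set : {set 'M[F]_(l, m)} := [set z | \rank z == k].

(* channel transition probability W(y | x) = P(Z = y - x), Z uniform on rank_set *)
Definition snc_W (y x : 'M[F]_(l, m)) : R :=
  if \rank (y - x) == k then (#|rank_set|%:R)^-1 else 0.

Definition is_distr (P : {ffun 'M[F]_(l, m) -> R}) : Prop :=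
  (forall x, 0 <= P x) /\ \sum_x P x = 1.

Definition out_distr (P : {ffun 'M[F]_(l, m) -> R}) (y : 'M[F]_(l, m)) : R :=
  \sum_x P x * snc_W y x.

Definition mutual_info (P : {ffun 'M[F]_(l, m) -> R}) : R :=
  \sum_x \sum_y
    (if P x * snc_W y x == 0 then 0
     else P x * snc_W y x * logq (snc_W y x / out_distr P y)).

Definition snc_sup_info : R := sup [set mutual_info P | P in is_distr].

End SNC.

(* Main.v *)
Require Import Defs.
From HB Require Import structures.
From mathcomp Require Import all_boot all_order all_algebra all_field.
From mathcomp Require Import all_classical all_reals all_analysis.
From mathcomp Require Import zify ring lra.
Import Order.TTheory GRing.Theory Num.Theory.
Local Open Scope ring_scope.

Lemma bin2_double k : ('C(k, 2) + 'C(k, 2) + k = k * k)%N.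
Proof.
elim: k => // k IH.
rewrite binS bin1; nia.
Qed.

Section Card.
Variable F : finFieldType.
Local Notation q := #|F|.

Lemma q_gt1 : (1 < q)%N.
Proof. exact: card_finNzRing_gt1. Qed.

Lemma card_unitmx k :
  (q ^ (k * k) <= #|[set A : 'M[F]_k | A \in unitmx]| * q ^ k)%N.
Proof.
case: k => [|k].
  rewrite muln0 expn0 muln1.
  apply/card_gt0P; exists 1%:M; rewrite inE unitmx1 //.
have -> : #|[set A : 'M[F]_k.+1 | A \in unitmx]| = #|('GL_k.+1[F])%g|.
  rewrite cardsT /= card_sub; apply: eq_card => A; rewrite !inE //.
rewrite card_GL //.
have H1 : (q ^ 'C(k.+1, 2) <= \prod_(1 <= i < k.+2) (q ^ i - 1))%N.
  rewrite -bin2_sum expn_sum big_add1 /= big_mkord.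
  rewrite big_mkord; apply: leq_prod => i _.
  have h1 := q_gt1; have h2 : (0 < q ^ i)%N by rewrite expn_gt0 ltnW.
  rewrite expnS; move: (q ^ i)%N h2 => t h2; move: q h1 => Q h1; nia.
rewrite -[(k.+1 * k.+1)%N](bin2_double k.+1) expnD expnD.
by apply: leq_mul => //; apply: leq_mul.
Qed.

Lemma rank_upper l m k : (k <= m)%N ->
  (#|rank_set F l m k| * #|[set A : 'M[F]_k | A \in unitmx]|
     <= q ^ (l * k) * q ^ (k * m))%N.
Proof.
move=> hkm.
pose A0 (z : 'M[F]_(l,m)) : 'M[F]_(l,k) := col_ebase z *m pid_mx k.
pose B0 (z : 'M[F]_(l,m)) : 'M[F]_(k,m) := pid_mx k *m row_ebase z.
have AB z : \rank z = k -> A0 z *m B0 z = z.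
  move=> rz; rewrite /A0 /B0 mulmxA -(mulmxA (col_ebase z)) mul_pid_mx !minnn.
  by rewrite -rz mulmx_ebase.
have Bfree z : row_free (B0 z).
  rewrite /row_free /B0 mxrankMfree ?rank_pid_mx //.
  by rewrite row_free_unit row_ebase_unit.
pose h (p : 'M[F]_(l,m) * 'M[F]_k) := (A0 p.1 *m p.2, invmx p.2 *m B0 p.1).
rewrite -cardsX -(card_in_imset (f := h)); last first.
  move=> [z g] [z' g'] /setXP[hz hg] /setXP[hz' hg'] [e1 e2].
  rewrite !inE in hz hg hz' hg'.
  have ez : z = z'.
    rewrite -(AB z (eqP hz)) -(AB z' (eqP hz')).
    have key (x : 'M[F]_(l,m)) (u : 'M[F]_k) : u \in unitmx ->
        A0 x *m B0 x = (A0 x *m u) *m (invmx u *m B0 x).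
      by move=> hu; rewrite [RHS]mulmxA -[A0 x *m u *m invmx u]mulmxA mulmxV // mulmx1.
    by rewrite (key z g hg) (key z' g' hg') /= e1 e2.
  subst z'; congr (_, _).
  by rewrite -[g]invmxK -[g']invmxK (row_free_inj (Bfree z) e2).
apply: leq_trans (max_card _) _.
by rewrite card_prod !card_mx.
Qed.

Lemma rank_lower a b k :
  (#|[set A : 'M[F]_k | A \in unitmx]| * (q ^ (k * b) * q ^ (a * k))
     <= #|rank_set F (k + a) (k + b) k|)%N.
Proof.
pose GL := [set A : 'M[F]_k | A \in unitmx].
pose D := finset.setX (finset.setX GL [set: 'M[F]_(k,b)]) [set: 'M[F]_(a,k)].
pose f (t : 'M[F]_k * 'M[F]_(k,b) * 'M[F]_(a,k)) : 'M[F]_(k + a, k + b) :=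
  col_mx 1%:M t.2 *m (t.1.1 *m row_mx 1%:M t.1.2).
have fE t : f t = block_mx t.1.1 (t.1.1 *m t.1.2) (t.2 *m t.1.1) (t.2 *m t.1.1 *m t.1.2).
  by rewrite /f mul_mx_row mulmx1 mul_col_row !mul1mx mulmxA.
have cD : #|D| = (#|GL| * (q ^ (k * b) * q ^ (a * k)))%N.
  by rewrite !cardsX !cardsT !card_mx mulnA.
rewrite -cD -(card_in_imset (f := f)); last first.
  move=> [[A X] Y] [[A' X'] Y'] /setXP[/setXP[hA _] _] /setXP[/setXP[hA' _] _].
  rewrite !fE /= => /eq_block_mx[eA eAX eYA _]; subst A'.
  rewrite !inE in hA.
  have -> : X = X' by rewrite -(mulKmx hA X) eAX mulKmx.
  by have -> : Y = Y' by rewrite -(mulmxK hA Y) eYA mulmxK.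
apply: subset_leq_card; apply/fintype.subsetP => _ /imsetP[[[A X] Y] hD ->].
move: hD => /setXP[/setXP[hA _] _]; rewrite !inE in hA *.
rewrite eqn_leq; apply/andP; split.
  rewrite /f; apply: leq_trans (mxrankM_maxr _ _) _.
  by apply: leq_trans (mxrankM_maxl _ _) _; rewrite mxrank_unit.
rewrite -{1}(mxrank_unit hA).
have eA : A = (row_mx 1%:M 0 *m f (A, X, Y)) *m col_mx 1%:M 0.
  rewrite /f mulmxA mul_row_col /= mul0mx addr0 mulmx1 mul1mx.
  by rewrite -mulmxA mul_row_col mulmx0 addr0 !mulmx1.
rewrite {1}eA; apply: leq_trans (mxrankM_maxl _ _) _.
exact: mxrankM_maxr.
Qed.
End Card.
Section Info.
Variables (R : realType) (F : finFieldType) (l m k : nat).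
Local Notation M := 'M[F]_(l, m).
Local Notation s := #|rank_set F l m k|.
Local Notation W := (@snc_W R F l m k).
Hypothesis s_gt0 : (0 < s)%N.
Implicit Types P : {ffun M -> R}.

Lemma sconst : \sum_(z : M) (if \rank z == k then (s%:R : R)^-1 else 0) = 1.
Proof.
rewrite -big_mkcond /= (eq_bigl (mem (rank_set F l m k))) => [|z]; last first.
  by rewrite /= inE.
by rewrite sumr_const -[LHS]mulr_natr mulVf // pnatr_eq0 -lt0n.
Qed.

Lemma sumW_y (x : M) : \sum_(y : M) W y x = 1.
Proof.
rewrite (reindex_inj (addIr x)) /= -sconst; apply: eq_bigr => y _.
by rewrite /snc_W addrK.
Qed.

Lemma sumW_x (y : M) : \sum_(x : M) W y x = 1.
Proof.
rewrite (reindex_inj (subrI y)) /= -sconst; apply: eq_bigr => x _.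
by rewrite /snc_W subKr.
Qed.

Lemma W_ge0 y x : 0 <= W y x.
Proof. by rewrite /snc_W; case: ifP => // _; rewrite invr_ge0 ler0n. Qed.

Lemma out_ge0 P : is_distr P -> forall y, 0 <= out_distr k P y.
Proof.
move=> [P0 _] y; apply: sumr_ge0 => x _; exact: mulr_ge0 (P0 x) (W_ge0 y x).
Qed.

Lemma sum_out P : is_distr P -> \sum_y out_distr k P y = 1.
Proof.
move=> [_ P1]; rewrite /out_distr exchange_big /= -P1.
by apply: eq_bigr => x _; rewrite -mulr_sumr sumW_y mulr1.
Qed.

Lemma ln_q_gt0 : 0 < ln (#|F|%:R : R).
Proof. by apply: ln_gt0; rewrite ltr1n card_finNzRing_gt1. Qed.

Lemma mi_formula P : is_distr P ->
  mutual_info k P = - logq F (s%:R : R)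
      - \sum_y out_distr k P y * logq F (out_distr k P y).
Proof.
move=> hP; have [P0 P1] := hP.
have sR : (0 : R) < s%:R by rewrite ltr0n.
have term x y : (if P x * W y x == 0 then 0
     else P x * W y x * logq F (W y x / out_distr k P y))
   = P x * W y x * (- logq F (s%:R)) - P x * W y x * logq F (out_distr k P y).
  case: eqP => [->|h]; first by rewrite !mul0r subrr.
  have hW : W y x = (s%:R)^-1.
    move: h; rewrite /snc_W; case: ifP => //; by rewrite mulr0.
  have hpos : 0 < P x * W y x.
    by rewrite lt_def; apply/andP; split; [apply/eqP | apply: mulr_ge0 (P0 x) (W_ge0 y x)].
  have ho : P x * W y x <= out_distr k P y.
    rewrite /out_distr (bigD1 x) //= lerDl; apply: sumr_ge0 => x' _.
    exact: mulr_ge0 (P0 x') (W_ge0 y x').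
  have opos : 0 < out_distr k P y by apply: lt_le_trans ho.
  rewrite /logq hW lnM ?posrE ?invr_gt0 // !lnV ?posrE //.
  by rewrite /logq; ring.
rewrite /mutual_info (eq_bigr (fun x => \sum_y (P x * W y x * (- logq F (s%:R))
     - P x * W y x * logq F (out_distr k P y)))); last first.
  by move=> x _; apply: eq_bigr => y _; apply: term.
rewrite (eq_bigr (fun x => P x * (- logq F (s%:R)) - \sum_y P x * W y x * logq F (out_distr k P y))); last first.
  move=> x _; rewrite sumrB; congr (_ - _).
  by rewrite -mulr_suml -mulr_sumr sumW_y mulr1.
rewrite sumrB -mulr_suml P1 mul1r; congr (_ - _).
rewrite exchange_big /=; apply: eq_bigr => y _.
by rewrite -mulr_suml.
Qed.


Local Notation n := (#|{: M}|%:R : R).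

Lemma n_gt0 : 0 < n.
Proof. by rewrite ltr0n card_mx expn_gt0 (ltnW (card_finNzRing_gt1 F)). Qed.
Lemma ln_n : ln n = (l * m)%:R * ln (#|F|%:R : R).
Proof.
rewrite card_mx natrX lnXn; first by rewrite mulr_natl.
by rewrite ltr0n (ltnW (card_finNzRing_gt1 F)).
Qed.

Lemma gibbs_term (o : R) : 0 <= o -> - (o * ln o) <= o * ln n + (n^-1 - o).
Proof.
move=> o0; have n0 := n_gt0.
have [->|opos] := eqVneq o 0.
  by rewrite !mul0r oppr0 add0r addr0 invr_ge0 ltW.
have op : 0 < o by rewrite lt_def opos o0.
have t0 : 0 < (n * o)^-1 by rewrite invr_gt0 mulr_gt0.
have H1 : -1 < (n * o)^-1 - 1 by rewrite ltrBrDr addNr.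
have := le_ln1Dx H1; rewrite addrC subrK => H2.
have H3 : o * ln ((n * o)^-1) <= o * ((n * o)^-1 - 1) by rewrite ler_wpM2l // ltW.
rewrite lnV ?posrE ?mulr_gt0 // lnM ?posrE // in H3.
have e : o * ((n * o)^-1 - 1) = n^-1 - o.
  by field; apply/andP; split; rewrite gt_eqF.
rewrite e in H3; lra.
Qed.

Lemma gibbs P : is_distr P ->
  - \sum_y out_distr k P y * logq F (out_distr k P y) <= (l * m)%:R.
Proof.
move=> hP.
have H : \sum_y - (out_distr k P y * ln (out_distr k P y)) <= ln n.
  apply: (@le_trans _ _ (\sum_y (out_distr k P y * ln n + (n^-1 - out_distr k P y)))).
    by apply: ler_sum => y _; apply: gibbs_term; apply: out_ge0.
  rewrite big_split /= -mulr_suml sum_out // mul1r sumrB sum_out // sumr_const.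
  rewrite -(mulr_natr (n^-1)) mulVf ?subrr ?addr0 //.
  by rewrite gt_eqF // n_gt0.
have -> : - \sum_y out_distr k P y * logq F (out_distr k P y)
    = (\sum_y - (out_distr k P y * ln (out_distr k P y))) / ln (#|F|%:R : R).
  by rewrite /logq mulr_suml -sumrN; apply: eq_bigr => y _; rewrite mulrA mulNr.
by rewrite ler_pdivrMr ?ln_q_gt0 // -ln_n.
Qed.

Lemma sumn_inv : \sum_(x : M) n^-1 = 1.
Proof. by rewrite sumr_const -(mulr_natr (n^-1)) mulVf // gt_eqF // n_gt0. Qed.

Lemma sup_eq : snc_sup_info R F l m k = (l * m)%:R - logq F (s%:R : R).
Proof.
set V := (l * m)%:R - logq F (s%:R : R).
have ub P : is_distr P -> mutual_info k P <= V.
  by move=> hP; rewrite mi_formula // /V; have := gibbs P hP; lra.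
pose P0 : {ffun M -> R} := [ffun => n^-1].
have hP0 : is_distr P0.
  split=> [x|]; first by rewrite ffunE invr_ge0 ltW // n_gt0.
  by under eq_bigr do rewrite ffunE; apply: sumn_inv.
have out0 y : out_distr k P0 y = n^-1.
  rewrite /out_distr; under eq_bigr do rewrite ffunE.
  by rewrite -mulr_sumr sumW_x mulr1.
have iv : mutual_info k P0 = V.
  rewrite mi_formula //; under eq_bigr do rewrite out0.
  rewrite -mulr_suml sumn_inv mul1r /V /logq lnV ?posrE ?n_gt0 // ln_n.
  have := ln_q_gt0; move=> hL.
  by field; rewrite gt_eqF.
apply/le_anti/andP; split.
  apply: ge_sup; first by exists V, P0.
  by move=> _ [P hP <-]; apply: ub.
apply: sup_upper_bound; last by exists P0.
split; first by exists V, P0.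
by exists V => _ [P hP <-]; apply: ub.
Qed.
End Info.
Lemma logq_le (R : realType) (F : finFieldType) (x y e1 e2 : nat) :
  (0 < x)%N -> (x * #|F| ^ e1 <= y * #|F| ^ e2)%N ->
  logq F (x%:R : R) + e1%:R <= logq F (y%:R : R) + e2%:R.
Proof.
move=> x0 hxy.
have q1 := card_finNzRing_gt1 F.
have qp : (0 < #|F|)%N by apply: ltnW.
have y0 : (0 < y)%N.
  case: y hxy => // ; rewrite mul0n leqn0 muln_eq0 expn_eq0.
  by rewrite eqn0Ngt x0 eqn0Ngt qp.
have hL := ln_q_gt0 R F.
have xr : (0 : R) < x%:R by rewrite ltr0n.
have yr : (0 : R) < y%:R by rewrite ltr0n.
have qr : (0 : R) < #|F|%:R by rewrite ltr0n.
have H : ln ((x * #|F| ^ e1)%:R : R) <= ln ((y * #|F| ^ e2)%:R).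
  rewrite ler_ln ?ler_nat // posrE ltr0n muln_gt0 expn_gt0 qp ?x0 ?y0 //.
rewrite !natrM !natrX !lnM ?posrE ?exprn_gt0 // !lnXn // in H.
rewrite /logq -(ler_pM2r hL) !mulrDl !mulfVK ?gt_eqF //.
by rewrite !mulr_natl.
Qed.

Theorem proposition1 (R : realType) (F : finFieldType) (lam om : R) :
  0 < lam -> lam < 1 -> 0 < om -> om <= 1 -> om <= (1 - lam) / lam ->
  forall eps : R, 0 < eps ->
  exists N0 : nat, forall N l k : nat,
    (N0 <= N)%N -> l%:R = lam * N%:R -> k%:R = l%:R * om ->
    `| (N%:R * l%:R)^-1 * snc_sup_info R F l (N - l) k
       - (1 - lam - om + lam * om ^+ 2) | < eps.
Proof.
move=> l0 l1 o0 o1 olam eps e0.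
exists (Num.truncn (eps^-1)).+1 => N l k hN hl hk.
have hNe : eps^-1 < N%:R.
  apply: lt_le_trans (truncnS_gt _) _; by rewrite ler_nat.
have Np : (0 : R) < N%:R by apply: le_lt_trans hNe; rewrite invr_ge0 ltW.
have lp : (0 : R) < l%:R by rewrite hl mulr_gt0.
have hlN : (l <= N)%N by rewrite -(ler_nat R) hl ler_piMl // ltW.
have hkl : (k <= l)%N by rewrite -(ler_nat R) hk ler_piMr // ltW.
have lo : lam * om <= 1 - lam.
  by have := ler_wpM2l (ltW l0) olam; rewrite mulrCA divff ?gt_eqF // mulr1.
have hkm : (k <= N - l)%N.
  rewrite -(ler_nat R) natrB // hk hl; nra.
set m := (N - l)%N in hkm *.
have G := card_unitmx F k.
have Lo := rank_lower F (l - k) (m - k) k.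
rewrite (subnKC hkl) (subnKC hkm) in Lo.
have Up := @rank_upper F l m k hkm.
set s := #|rank_set F l m k| in Lo Up *.
set g := #|[set A : 'M[F]_k | A \in unitmx]| in G Lo Up.
have qp : (0 < #|F|)%N by apply: ltnW; apply: card_finNzRing_gt1.
have g0 : (0 < g)%N.
  by move: G; case: (g) => //; rewrite mul0n leqn0 expn_eq0 eqn0Ngt qp.
have s0 : (0 < s)%N.
  apply: leq_trans Lo; by rewrite muln_gt0 g0 muln_gt0 !expn_gt0 qp.
have U' : (s * #|F| ^ (k * k) <= 1 * #|F| ^ (l * k + k * m + k))%N.
  rewrite mul1n !expnD; apply: leq_trans (_ : s * (g * #|F| ^ k) <= _)%N.
    by rewrite leq_mul2l G orbT.
  by rewrite mulnA leq_mul.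
have L' : (1 * #|F| ^ (k * k + k * (m - k) + (l - k) * k) <= s * #|F| ^ k)%N.
  rewrite mul1n !expnD.
  move: G Lo; move: (#|F| ^ (k * k))%N (#|F| ^ k)%N (#|F| ^ (k * (m - k)))%N (#|F| ^ ((l - k) * k))%N.
  move=> X K A B h1 h2.
  apply: leq_trans (_ : g * K * A * B <= _)%N.
    by rewrite leq_mul2r leq_mul2r h1 !orbT.
  have h3 := leq_mul h2 (leqnn K).
  apply: leq_trans h3; apply: eq_leq; nia.
have hU := @logq_le R F _ _ _ _ s0 U'.
have hL := @logq_le R F _ _ _ _ (ltn0Sn 0) L'.
rewrite /logq ln1 mul0r add0r in hL.
rewrite /logq ln1 mul0r add0r in hU.
rewrite (@sup_eq R F l m k s0) /logq.
set Ls := ln (s%:R : R) / ln (#|F|%:R : R) in hL hU *.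
rewrite !natrD !natrM !natrB // in hL hU *.
set Nr := (N%:R : R) in hNe Np hl hL hU *.
set lr := (l%:R : R) in hl hk lp hL hU *.
set kr := (k%:R : R) in hk hL hU *.
have eq : (Nr * lr)^-1 * (lr * (Nr - lr) - Ls) - (1 - lam - om + lam * om ^+ 2)
    = ((lr + (Nr - lr) - kr) * kr - Ls) / (Nr * lr).
  rewrite hk hl; field.
  by rewrite gt_eqF ?gt_eqF ?l0 //.
have b1 : (lr + (Nr - lr) - kr) * kr - Ls <= kr by lra.
have b2 : - kr <= (lr + (Nr - lr) - kr) * kr - Ls by lra.
have kl : kr <= lr by rewrite /kr /lr ler_nat.
have eN : 1 < eps * Nr.
  have h := hNe; rewrite -(ltr_pM2l e0) in h.
  by rewrite mulfV ?gt_eqF // in h.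
have el : lr < eps * (Nr * lr) by rewrite mulrA -{1}(mul1r lr) ltr_pM2r.
have NL : 0 < Nr * lr by rewrite mulr_gt0.
rewrite eq ltr_norml ltr_pdivrMr // ltr_pdivlMr //; apply/andP; split; lra.
Qed.
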